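(* Let $d\ge 1$ and let $s$ be an odd integer with $1<s<2^d$. Then $\lambda^*(d,s)\le \frac12$.
   Context: For integers $n\ge d\ge 1$, a $d$-flat in $\mathbb{F}_2^n$ is a set $x_0+U$ with $x_0\in\mathbb{F}_2^n$ and $U$ a $d$-dimensional linear subspace of $\mathbb{F}_2^n$. For $A\subseteq\mathbb{F}_2^n$ and an integer $0\le s\le 2^d$, $\lambda^*(n,d,s,A)$ denotes the fraction of $d$-flats $Q$ in $\mathbb{F}_2^n$ with $|Q\cap A|=s$. Let $\lambda^*(n,d,s)=\max_{A\subseteq\mathbb{F}_2^n}\lambda^*(n,d,s,A)$; this is non-increasing in $n$, and $\lambda^*(d,s)=\lim_{n\to\infty}\lambda^*(n,d,s)$. *)

(* Defs.v *)
From mathcomp Require Import all_boot all_order all_algebra.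
From mathcomp Require Import all_classical all_reals all_analysis.
Set Implicit Arguments. Unset Strict Implicit. Unset Printing Implicit Defensive.
Import Order.TTheory GRing.Theory Num.Theory numFieldNormedType.Exports.
Local Open Scope ring_scope.

Definition vec (n : nat) := 'rV['F_2]_n.

(* The set of d-flats of F_2^n: sets x0 + U with U the row space of a
   d x n matrix of rank d (i.e. U a d-dimensional linear subspace). *)
Definition flats (n d : nat) : {set {set vec n}} :=
  [set Q : {set vec n} | [exists x0 : vec n, exists U : 'M['F_2]_(d, n),
      (\rank U == d) && (Q == [set x : vec n | (x - x0 <= U)%MS])]].

Definition lambda_A (R : realType) (n d s : nat) (A : {set vec n}) : R :=
  #|[set Q in flats n d | (#|Q :&: A| == s)%N]|%:R / #|flats n d|%:R.

(* lambda^*(n,d,s) = max over A ⊆ F_2^n (all values are >= 0). *)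
Definition lambda_star (R : realType) (n d s : nat) : R :=
  \big[Num.max/0]_(A : {set vec n}) @lambda_A R n d s A.

Definition lambda_lim (R : realType) (d s : nat) : R :=
  limn (fun n => lambda_star R n d s).

(* Main.v *)
Require Import Defs.
From mathcomp Require Import all_boot all_order all_algebra.
From mathcomp Require Import all_classical all_reals all_analysis.
From mathcomp Require Import zify ring lra.
Import Order.TTheory GRing.Theory Num.Theory numFieldNormedType.Exports.
Local Open Scope ring_scope.
Set Implicit Arguments. Unset Strict Implicit.
Set Implicit Arguments. Unset Strict Implicit.

Section G.
Variables (n : nat) (A : {set vec n}).
Definition gA (y : vec n) : int := if y \in A then -1 else 1.
Definition Sgn d (x : vec n) (h : 'M['F_2]_(d, n)) : int :=
  \prod_(w : 'rV['F_2]_d) gA (x + w *m h).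

Lemma sum_col k (F : 'M['F_2]_(1 + k, n) -> int) :
  \sum_(h : 'M['F_2]_(1 + k, n)) F h =
  \sum_(r : 'rV['F_2]_n) \sum_(h' : 'M['F_2]_(k, n)) F (col_mx r h').
Proof.
rewrite pair_big /=.
rewrite (reindex (fun p : 'rV['F_2]_n * 'M['F_2]_(k, n) => col_mx p.1 p.2)) //=.
exists (fun h => (usubmx h, dsubmx h)) => [[a b] _|h _] /=.
  by rewrite col_mxKu col_mxKd.
by rewrite vsubmxK.
Qed.

Lemma prod_row k (F : 'rV['F_2]_(1 + k) -> int) :
  \prod_(w : 'rV['F_2]_(1 + k)) F w =
  \prod_(a : 'rV['F_2]_1) \prod_(w' : 'rV['F_2]_k) F (row_mx a w').
Proof.
rewrite pair_big /=.
rewrite (reindex (fun p : 'rV['F_2]_1 * 'rV['F_2]_k => row_mx p.1 p.2)) //=.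
exists (fun h => (lsubmx h, rsubmx h)) => [[a b] _|h _] /=.
  by rewrite row_mxKl row_mxKr.
by rewrite hsubmxK.
Qed.

Lemma rv1_cases (a : 'rV['F_2]_1) : a = 0 \/ a = 1%:M.
Proof.
rewrite [a]mx11_scalar; case: (a 0 0) => [[|[|m]] i] //.
- by left; apply/matrixP => x y; rewrite !mxE; case: (_ == _) => /=; apply/val_inj.
- by right; congr (_%:M); apply/val_inj.
Qed.

Lemma prod_rv1 (F : 'rV['F_2]_1 -> int) :
  \prod_(a : 'rV['F_2]_1) F a = F 0 * F 1%:M.
Proof.
rewrite (bigD1 0) //=; congr (_ * _).
rewrite (big_pred1 1%:M) // => a /=.
have h10 : (1%:M : 'rV['F_2]_1) != 0.
  by apply/eqP => /matrixP /(_ 0 0); rewrite !mxE.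
case: (rv1_cases a) => ->; first by rewrite eqxx /= eq_sym (negbTE h10).
by rewrite eqxx h10.
Qed.

Lemma Sgn_col k x r (h' : 'M['F_2]_(k, n)) :
  Sgn x (col_mx r h') = Sgn x h' * Sgn (x + r) h'.
Proof.
rewrite /Sgn prod_row prod_rv1; congr (_ * _); apply: eq_bigr => w _;
  rewrite mul_row_col.
  by rewrite mul0mx add0r.
by rewrite mul1mx addrA.
Qed.

Lemma gowers k : 0 <= \sum_(x : vec n) \sum_(h : 'M['F_2]_(k.+1, n)) Sgn x h.
Proof.
have -> : \sum_(x : vec n) \sum_(h : 'M['F_2]_(k.+1, n)) Sgn x h =
   \sum_(h' : 'M['F_2]_(k, n)) (\sum_(x : vec n) Sgn x h') ^+ 2.
  under eq_bigr do rewrite sum_col.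
  under eq_bigr do under eq_bigr do under eq_bigr do rewrite Sgn_col.
  under eq_bigr do rewrite exchange_big.
  rewrite exchange_big; apply: eq_bigr => h' _.
  rewrite expr2 mulr_suml; apply: eq_bigr => x _.
  rewrite -mulr_sumr; congr (_ * _).
  by rewrite [RHS](reindex_inj (addrI x)).
by apply: sumr_ge0 => h _; exact: sqr_ge0.
Qed.
End G.
Section F.
Variables (n d : nat).
Implicit Types (x y : vec n) (h M : 'M['F_2]_(d, n)).
Definition Qf x h : {set vec n} := [set y : vec n | (y - x <= h)%MS].

Lemma subB_sub m (a b : 'rV['F_2]_n) (M : 'M['F_2]_(m, n)) :
  (a <= M)%MS -> (b <= M)%MS -> (a - b <= M)%MS.
Proof. by move=> ha hb; apply: addmx_sub => //; rewrite eqmx_opp. Qed.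

Lemma Qf_sub x h x0 M : Qf x h \subset Qf x0 M ->
  (x - x0 <= M)%MS /\ (h <= M)%MS.
Proof.
move=> /fintype.subsetP sQ.
have hx : (x - x0 <= M)%MS.
  by have := sQ x; rewrite !inE subrr sub0mx => /(_ isT).
split=> //; apply/row_subP => i.
have := sQ (x + row i h); rewrite !inE addrAC subrr add0r row_sub => /(_ isT) h1.
have -> : row i h = (x + row i h - x0) - (x - x0) by rewrite opprB -addrA addKr [x + _]addrC addrK.
exact: subB_sub.
Qed.

Lemma Qf_eq x h x0 M :
  (Qf x h == Qf x0 M) = (x - x0 <= M)%MS && (h == M)%MS.
Proof.
apply/eqP/andP.
  move=> e.
  have [h1 h2] : (x - x0 <= M)%MS /\ (h <= M)%MS by apply: Qf_sub; rewrite e subxx.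
  have [_ h4] : (x0 - x <= h)%MS /\ (M <= h)%MS by apply: Qf_sub; rewrite e subxx.
  by split=> //; apply/andP.
move=> [h1 /andP[h2 h3]]; apply/finset.setP => y; rewrite !inE; apply/idP/idP => hy.
  have -> : y - x0 = (y - x) + (x - x0) by rewrite addrA subrK.
  exact: addmx_sub (submx_trans hy h2) h1.
have -> : y - x = (y - x0) - (x - x0) by rewrite opprB addrA subrK.
exact: subB_sub (submx_trans hy h3) (submx_trans h1 h3).
Qed.

Definition Kc := (#|'rV['F_2]_d| * #|[pred G : 'M['F_2]_d | G \in unitmx]|)%N.

Lemma card_coset x0 M : row_free M -> #|[pred y : vec n | (y - x0 <= M)%MS]| = #|'rV['F_2]_d|.
Proof.
move=> fM.
have -> : #|[pred y : vec n | (y - x0 <= M)%MS]| =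
   #|[set x0 + w *m M | w in 'rV['F_2]_d]|.
  apply: eq_card => y; rewrite !inE; apply/idP/finset.imsetP.
    by move=> /submxP[w hw]; exists w => //; rewrite -hw addrC subrK.
  by move=> [w _ ->]; rewrite [x0 + _]addrC addrK submxMl.
rewrite card_imset //; move=> w1 w2 /addrI; exact: row_free_inj.
Qed.

Lemma card_eqmx M : row_free M ->
  #|[pred h : 'M['F_2]_(d, n) | (h == M)%MS]| = #|[pred G : 'M['F_2]_d | G \in unitmx]|.
Proof.
move=> fM.
have -> : #|[pred h : 'M['F_2]_(d, n) | (h == M)%MS]| =
   #|[set G *m M | G in [pred G : 'M['F_2]_d | G \in unitmx]]|.
  apply: eq_card => h; rewrite !inE; apply/idP/finset.imsetP.
    move=> hM; have := hM; case/andP => /submxP[D hD] _.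
    exists D => //; rewrite inE -row_free_unit /row_free.
    rewrite eqn_leq rank_leq_row /=.
    apply: (@leq_trans (\rank h)); last by rewrite hD mxrankM_maxl.
    by rewrite (eqmx_rank hM); move/eqP: fM => ->.
  move=> [G]; rewrite inE => uG ->.
  apply/eqmxP; apply: eqmxMfull; by rewrite row_full_unit.
by rewrite card_imset //; exact: row_free_inj.
Qed.

Lemma fiber x0 M : row_free M ->
  #|[set p : vec n * 'M['F_2]_(d, n) | (\rank p.2 == d) && (Qf p.1 p.2 == Qf x0 M)]| = Kc.
Proof.
move=> fM.
rewrite /Kc -(card_coset x0 fM) -(card_eqmx fM) -cardX; apply: eq_card => -[x h].
rewrite !inE /= Qf_eq.
case hM: (h == M)%MS; last by rewrite !andbF.
by rewrite (eqmx_rank hM) andbT; move: fM; rewrite /row_free => ->.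
Qed.
End F.

Section M.
Variables (n d : nat) (A : {set vec n}).

Lemma Qf_img (x : vec n) (h : 'M['F_2]_(d, n)) :
  Qf x h = [set x + w *m h | w in 'rV['F_2]_d].
Proof.
apply/finset.setP => y; rewrite !inE; apply/idP/finset.imsetP.
  by move=> /submxP[w hw]; exists w => //; rewrite -hw addrC subrK.
by move=> [w _ ->]; rewrite [x + _]addrC addrK submxMl.
Qed.

Lemma prod_gA (Q : {set vec n}) :
  \prod_(y in Q) gA A y = (-1) ^+ #|Q :&: A|.
Proof.
rewrite (bigID (mem A)) /= [X in _ * X]big1 ?mulr1; last first.
  by move=> y /andP[_ /negbTE hy]; rewrite /gA hy.
rewrite -prodr_const; apply: eq_big => [y|y /andP[_ hy]]; first by rewrite !inE.
by rewrite /gA hy.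
Qed.

Lemma Sgn_full (x : vec n) (h : 'M['F_2]_(d, n)) : row_free h ->
  Sgn A x h = (-1) ^+ #|Qf x h :&: A|.
Proof.
move=> fh; rewrite -prod_gA Qf_img big_imset /=; first by [].
by move=> w1 w2 _ _ /addrI; exact: row_free_inj.
Qed.

Definition Pset := [set p : vec n * 'M['F_2]_(d, n) | \rank p.2 == d].

Lemma sum_P (G : {set vec n} -> int) :
  \sum_(p in Pset) G (Qf p.1 p.2) = \sum_(Q in flats n d) G Q *+ Kc d.
Proof.
rewrite (partition_big (fun p => Qf p.1 p.2) (mem (flats n d))) /=; last first.
  move=> [x h]; rewrite !inE /= => hr; apply/existsP; exists x; apply/existsP; exists h.
  by rewrite hr eqxx.
apply: eq_bigr => Q; rewrite inE => /existsP[x0 /existsP[M /andP[hM /eqP eQ]]].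
rewrite (eq_bigl (mem [set p : vec n * 'M['F_2]_(d, n) | (\rank p.2 == d) && (Qf p.1 p.2 == Qf x0 M)])); last first.
  by move=> p; rewrite !inE eQ; congr (_ && (_ == _)); apply/finset.setP => y; rewrite !inE.
rewrite (eq_bigr (fun _ => G Q)); last first.
  move=> p; rewrite !inE => /andP[_ /eqP ->]; rewrite eQ; by congr G.
by rewrite sumr_const fiber.
Qed.
End M.

Definition Oset n d (A : {set vec n}) := [set Q in flats n d | odd #|Q :&: A|].
Definition Fu n d := [set h : 'M['F_2]_(d, n) | \rank h == d].
Definition Bs n d := [set h : 'M['F_2]_(d, n) | \rank h != d].

Lemma Sgn_le1 n d (A : {set vec n}) x (h : 'M['F_2]_(d, n)) : Sgn A x h <= 1.
Proof.
apply: le_trans (ler_norm _) _; rewrite normr_prod big1 // => w _.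
by rewrite /gA; case: (_ \in _).
Qed.

Lemma main_ineq k n (A : {set vec n}) :
  (2 * #|Oset k.+1 A| * #|Fu n k.+1| <= #|flats n k.+1| * (#|Fu n k.+1| + #|Bs n k.+1|))%N.
Proof.
have G0 := gowers A k.
rewrite pair_big /= in G0.
rewrite (bigID (fun p => \rank p.2 == k.+1)) /= in G0.
set S1 := (X in 0 <= X + _) in G0.
set S2 := (X in 0 <= _ + X) in G0.
have H1 : S1 = (\sum_(Q in flats n k.+1) (-1) ^+ #|Q :&: A|) *+ Kc k.+1.
  rewrite -sumrMnl -sum_P /S1; apply: eq_big => [p|p]; first by rewrite inE.
  by move=> hp; apply: Sgn_full.
have H2 : S2 <= (#|'rV['F_2]_n| * #|Bs n k.+1|)%N%:R.
  apply: le_trans (_ : \sum_(p : 'rV['F_2]_n * 'M['F_2]_(k.+1, n) | \rank p.2 != k.+1) (1%N)%:R <= _).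
    by apply: ler_sum => p _; exact: Sgn_le1.
  rewrite -natr_sum sum1_card -cardX ler_nat; apply: eq_leq; apply: eq_card => -[x h].
  by rewrite !inE.
have H3 : (#|Pset n k.+1| = Kc k.+1 * #|flats n k.+1|)%N.
  have := sum_P (n:=n) k.+1 (fun _ => (1 : int)); rewrite !sumr_const -mulrnA => /eqP.
  by rewrite eqr_nat mulnC => /eqP.
have H4 : (#|Pset n k.+1| = #|'rV['F_2]_n| * #|Fu n k.+1|)%N.
  by rewrite -cardX; apply: eq_card => -[x h]; rewrite !inE.
have H5 : \sum_(Q in flats n k.+1) (-1) ^+ #|Q :&: A| =
    #|flats n k.+1|%:Z - 2 * #|Oset k.+1 A|%:Z.
  rewrite (bigID (fun Q => odd #|Q :&: A|)) /=.
  rewrite (eq_bigr (fun _ => -1)); last by move=> Q /andP[_ hQ]; rewrite -signr_odd hQ.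
  rewrite [X in _ + X](eq_bigr (fun _ => 1)); last first.
    by move=> Q /andP[_ hQ]; rewrite -signr_odd (negbTE hQ).
  rewrite sumrN (eq_bigr (fun _ => (1%N)%:R : int)) // -natr_sum.
  rewrite [X in _ + X](eq_bigr (fun _ => (1%N)%:R : int)) // -natr_sum.
  rewrite !sum1dep_card.
  have <- := cardID (mem (fun Q : {set vec n} => odd #|Q :&: A|)) (mem (flats n k.+1)).
  have -> : #|Oset k.+1 A| = #|[set x | (x \in flats n k.+1) && odd #|x :&: A|]|.
    by apply: eq_card => Q; rewrite !inE.
  have -> : #|[predI mem (flats n k.+1) & mem (fun Q : {set vec n} => odd #|Q :&: A|)]| =
     #|[set x | (x \in flats n k.+1) && odd #|x :&: A|]|.
    by apply: eq_card => Q; rewrite !inE.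
  have -> : #|[predD mem (flats n k.+1) & mem (fun Q : {set vec n} => odd #|Q :&: A|)]| =
     #|[set x | (x \in flats n k.+1) && ~~ odd #|x :&: A|]|.
    by apply: eq_card => Q; rewrite !inE andbC.
  rewrite !natz PoszD; set a := Posz _; set b := Posz _; rewrite -[a in RHS]/a; ring.
rewrite H5 in H1.
have N0 : (0 < #|'rV['F_2]_n|)%N by apply/card_gt0P; exists 0.
have KF : (Kc k.+1 * #|flats n k.+1| = #|'rV['F_2]_n| * #|Fu n k.+1|)%N by rewrite -H3 H4.
move: G0 H1 H2 KF N0.
set K := Kc k.+1; set F := #|flats n k.+1|; set O := #|Oset k.+1 A|.
set fu := #|Fu n k.+1|; set B := #|Bs n k.+1|; set N := #|'rV['F_2]_n|.
move=> G0 H1 H2 KF N0.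
have E1 : 0 <= (F%:Z - 2 * O%:Z) * K%:Z + N%:Z * B%:Z.
  apply: le_trans G0 _; rewrite H1 pmulrn mulrzz; apply: lerD; first exact: lexx.
  by move: H2; rewrite natz PoszM.
have E2 : 0 <= N%:Z * ((F%:Z - 2 * O%:Z) * fu%:Z + B%:Z * F%:Z).
  have -> : N%:Z * ((F%:Z - 2 * O%:Z) * fu%:Z + B%:Z * F%:Z) =
     (F%:Z - 2 * O%:Z) * (N * fu)%N%:Z + N%:Z * B%:Z * F%:Z by rewrite PoszM; ring.
  rewrite -KF PoszM.
  have -> : (F%:Z - 2 * O%:Z) * (K%:Z * F%:Z) + N%:Z * B%:Z * F%:Z =
     ((F%:Z - 2 * O%:Z) * K%:Z + N%:Z * B%:Z) * F%:Z by ring.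
  by apply: mulr_ge0.
rewrite pmulr_rge0 in E2; last by lia.
rewrite -lez_nat -subr_ge0 !PoszM PoszD.
have -> : F%:Z * (fu%:Z + B%:Z) - 2%N%:Z * O%:Z * fu%:Z =
   (F%:Z - 2 * O%:Z) * fu%:Z + B%:Z * F%:Z by ring.
exact: E2.
Qed.

Lemma F2_nz1 (c : 'F_2) : c != 0 -> c = 1.
Proof. by case: c => [[|[|m]] i] //= _; apply/val_inj. Qed.

Definition ce d (w : 'rV['F_2]_d) : 'cV['F_2]_d :=
  if [pick j | w 0 j != 0] is Some j then delta_mx j 0 else 0.

Lemma w_ce d (w : 'rV['F_2]_d) : w != 0 -> w *m ce w = 1%:M.
Proof.
move=> wn0; rewrite /ce; case: pickP => [j hj|h0].
  rewrite -colE [col j w]mx11_scalar mxE (F2_nz1 hj).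
  by [].
case/eqP: wn0; apply/matrixP => a b; rewrite ord1 mxE.
by move: (h0 b) => /= /negbFE /eqP.
Qed.

Lemma nonfree_ker d n (h : 'M['F_2]_(d, n)) : \rank h != d ->
  exists w : 'rV['F_2]_d, (w != 0) && (w *m h == 0).
Proof.
move=> hr.
have : kermx h != 0 by rewrite kermx_eq0.
case: (boolP [exists i, row i (kermx h) != 0]) => [/existsP[i hi] _|hn].
  exists (row i (kermx h)); rewrite hi /=.
  by rewrite -row_mul mulmx_ker row0.
case/eqP; apply/row_matrixP => i; rewrite row0.
by apply/eqP; move: hn; rewrite negb_exists => /forallP /(_ i); rewrite negbK.
Qed.

Lemma bound_B d n :
  (#|Bs n d| * #|'rV['F_2]_n| <= #|'rV['F_2]_d| * #|'M['F_2]_(d, n)|)%N.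
Proof.
set Pairs := [set p : 'rV['F_2]_d * 'M['F_2]_(d, n) | (p.1 != 0) && (p.1 *m p.2 == 0)].
have a : (#|Bs n d| <= #|Pairs|)%N.
  pose wit (h : 'M['F_2]_(d, n)) := odflt 0 [pick w : 'rV['F_2]_d | (w != 0) && (w *m h == 0)].
  rewrite -(card_imset (mem (Bs n d)) (f := fun h => (wit h, h))); last first.
    by move=> h1 h2 [].
  apply: subset_leq_card; apply/fintype.subsetP => p /finset.imsetP[h hB ->].
  rewrite inE /= /wit; case: pickP => [w hw //|h0].
  move: hB; rewrite inE => /nonfree_ker[w hw].
  by move: (h0 w); rewrite hw.
apply: leq_trans (leq_mul a (leqnn _)) _.
rewrite -card_prod -cardX.
pose g (q : ('rV['F_2]_d * 'M['F_2]_(d, n)) * 'rV['F_2]_n) :=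
  (q.1.1, q.1.2 + ce q.1.1 *m q.2).
rewrite -(card_in_imset (f := g)); last first.
  move=> [[w h] v] [[w' h'] v']; rewrite !inE /= => /andP[/andP[wn0 wh] _] /andP[/andP[_ wh'] _].
  rewrite /g /= => -[ew eh]; subst w'.
  have ev : v = v'.
    have := congr1 (mulmx w) eh.
    by rewrite !mulmxDr (eqP wh) (eqP wh') !mulmxA w_ce // !add0r !mul1mx.
  subst v'; by move/addIr: eh => ->.
exact: max_card.
Qed.

Lemma card_rV n : #|'rV['F_2]_n| = (2 ^ n)%N.
Proof. by rewrite card_mx card_Fp // mul1n. Qed.

Lemma card_M d n : (#|Fu n d| + #|Bs n d| = #|'M['F_2]_(d, n)|)%N.
Proof.
rewrite -(cardsC (Fu n d)); congr (_ + _); apply: eq_card => h.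
by rewrite !inE.
Qed.

Lemma nat_step c O Fu B F N D :
  (0 < Fu + B)%N -> (c <= O)%N -> (2 * O * Fu <= F * (Fu + B))%N ->
  (B * N <= D * (Fu + B))%N -> (D <= N)%N ->
  (2 * c * (N - D) <= F * N)%N.
Proof.
move=> M0 cO main bB DN.
have s1 : ((Fu + B) * (N - D) <= Fu * N)%N by rewrite mulnBr; nia.
have s2 : (2 * O * (N - D) * (Fu + B) <= F * N * (Fu + B))%N.
  apply: (@leq_trans (2 * O * (Fu * N))); first by rewrite -!mulnA leq_mul2l; nia.
  nia.
rewrite leq_pmul2r // in s2.
apply: leq_trans s2; rewrite leq_mul2r leq_mul2l cO; lia.
Qed.

Lemma lamA_nat k n (A : {set vec n}) s : odd s -> (k.+1 <= n)%N ->
  (2 * #|[set Q in flats n k.+1 | #|Q :&: A| == s]| * (2 ^ n - 2 ^ k.+1)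
    <= #|flats n k.+1| * 2 ^ n)%N.
Proof.
move=> os kn.
rewrite -!card_rV.
apply: (nat_step (O := #|Oset k.+1 A|) (Fu := #|Fu n k.+1|) (B := #|Bs n k.+1|)).
- by rewrite card_M; apply/card_gt0P; exists 0.
- apply: subset_leq_card; apply/fintype.subsetP => Q; rewrite !inE => /andP[-> /eqP ->].
  by rewrite os.
- exact: main_ineq.
- by rewrite card_M bound_B.
- by rewrite !card_rV leq_exp2l.
Qed.

Unset Implicit Arguments.
Local Open Scope classical_set_scope.

Theorem theorem1p3 (R : realType) (d s : nat) :
  (1 <= d)%N -> odd s -> (1 < s)%N -> (s < 2 ^ d)%N ->
  lambda_lim R d s <= 1 / 2.
Proof.
move=> d1 os _ _.
case: d d1 => // k _.
rewrite /lambda_lim.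
set u := fun n => lambda_star R n k.+1 s.
case: (pselect (cvg (u @ \oo))) => [cu|ncu]; last first.
  rewrite dvgP //; have -> : (point : R) = 0 := erefl.
  by rewrite mul1r invr_ge0 ler0n.
apply/ler_addgt0Pr => e e0.
apply: limr_le => //.
have [m hm] : exists m : nat, (1 + 2 * e) * (2 ^ k.+1)%N%:R <= 2 * e * m%:R.
  set x := (1 + 2 * e) * (2 ^ k.+1)%N%:R / (2 * e).
  exists (Num.Def.trunc x).+1.
  have hx := truncnS_gt x.
  have he : 0 < 2 * e by rewrite mulr_gt0.
  rewrite -ler_pdivrMl //; apply: le_trans (ltW hx); rewrite /x mulrC.
  by [].
exists (maxn m k.+2) => // n /= hn.
have mn : (m <= n)%N by move: hn; rewrite geq_max => /andP[].
have kn : (k.+1 <= n)%N by move: hn; rewrite geq_max => /andP[_]; lia.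
have Nm : m%:R <= (2 ^ n)%N%:R :> R.
  by rewrite ler_nat; apply: leq_trans mn (ltnW (ltn_expl n (ltnSn 1))).
have DN : (2 ^ k.+1 <= 2 ^ n)%N by rewrite leq_exp2l.
have DNl : (2 ^ k.+1 < 2 ^ n)%N by rewrite ltn_exp2l //; lia.
rewrite /u /lambda_star; apply: bigmax_le.
  by rewrite addr_ge0 ?ltW // mul1r invr_ge0 ler0n.
move=> A _; rewrite /lambda_A.
have h := lamA_nat A os kn.
move: h; set c := #|_|; set F := #|flats n k.+1| => h.
have [F0|Fpos] := posnP F.
  by rewrite F0 invr0 mulr0 addr_ge0 ?ltW // mul1r invr_ge0 ler0n.
rewrite ler_pdivrMr ?ltr0n //.
have hR : 2 * c%:R * ((2 ^ n)%N%:R - (2 ^ k.+1)%N%:R) <= F%:R * (2 ^ n)%N%:R :> R.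
  by rewrite -natrB // -!natrM ler_nat.
have DNR : (2 ^ k.+1)%N%:R < (2 ^ n)%N%:R :> R by rewrite ltr_nat.
have FR : 0 < F%:R :> R by rewrite ltr0n.
have cR : 0 <= c%:R :> R by rewrite ler0n.
move: hR DNR FR cR hm Nm e0.
set D := (2 ^ k.+1)%N%:R; set N := (2 ^ n)%N%:R; set M := m%:R; set FF := F%:R; set C := c%:R.
move=> hR DNR FR cR hm Nm e0.
have h1 : (1 + 2 * e) * D <= 2 * e * N by nra.
have h2 : FF * N <= (1 + 2 * e) * FF * (N - D) by nra.
have h3 : 0 < N - D by lra.
rewrite -(ler_pM2r h3); nra.
Qed.
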